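(* Let $m,\ell\in\mathbb{N}$ with $m\ge4\ell$, and let $\mathcal{S}=(i_1,\dots,i_{\ell'})\in[m]^{\ell'}$ be a sequence of length $\ell'\le\ell$. Then $\mathcal{S}$ is $(m,\ell)$-clustered or $(m,\ell)$-dispersed.
   Context: $[m]=\{1,\dots,m\}$, $\mathbb{N}=\{1,2,\dots\}$, and $[a,b]$ denotes the integer interval $\{a,\dots,b\}$. Let $I=\{i_1,\dots,i_{\ell'}\}$. $\mathcal{S}$ is $(m,\ell)$-clustered if there exist $k\in\mathbb{N}$, $p_1,\dots,p_k\in[m]$, $q_1,\dots,q_k\in\mathbb{N}$ with: (i) the intervals $[p_c,p_c+q_c]$ are pairwise disjoint, contained in $[1,m]$, and their union contains $I$; (ii) for every $c\in[k]$, with $K_c=[p_c,p_c+q_c]\cap I$, $q_c+1\ge\lfloor\frac{m}{2\ell}\rfloor\cdot\min\big(\max(K_c)-p_c+1,\;p_c+q_c-\min(K_c)+1\big)$; (iii) $\sum_{j=1}^k(q_j+1)+2(\ell-\ell')\le m$. $\mathcal{S}$ is $(m,\ell)$-dispersed if there exist $k\in\mathbb{Z}_{\ge0}$, $\psi,p_1,\dots,p_k\in[m]$ and $\xi,q_1,\dots,q_k\in\mathbb{N}$ such that, with $K=I\cap[\psi,\psi+\xi]$: (i) the intervals $[\psi,\psi+\xi],[p_1,p_1+q_1],\dots,[p_k,p_k+q_k]$ are pairwise disjoint, contained in $[1,m]$, and their union contains $I$; (ii) for $j=1,\dots,k$, $q_j\ge 2\cdot|\{c\in[\ell']:i_c\in[p_j,p_j+q_j]\}|-1$;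 (iii) $K=\{\psi\}$ or $K=\{\psi+\xi\}$; (iv) $\xi\ge\lfloor\frac{m}{2\ell}\rfloor\cdot|\{c:i_c\in K\}|-1$; (v) $(\xi+1)+\sum_{j=1}^k(q_j+1)+2(\ell-\ell')\le m$. *)

(* Defs.v *)
From mathcomp Require Import all_boot.
Set Implicit Arguments. Unset Strict Implicit. Unset Printing Implicit Defensive.

Definition in_itv (a b x : nat) : bool := (a <= x) && (x <= b).

(* I = set of entries of S; K = I ∩ [a,b], as a sequence (entries of S in [a,b]). *)
Definition Kseq (S : seq nat) (a b : nat) : seq nat := [seq x <- S | in_itv a b x].

Definition seq_max (s : seq nat) : nat := \max_(x <- s) x.
Definition seq_min (s : seq nat) (dflt : nat) : nat := \big[minn/dflt]_(x <- s) x.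

(* [(m,l)]-clustered.  Families p_1..p_k, q_1..q_k are given as functions on
   indices c < k (index c here corresponds to c+1 in the paper). *)
Definition clustered (m l : nat) (S : seq nat) : Prop :=
  exists (k : nat) (p q : nat -> nat),
    0 < k /\
    (forall c, c < k -> 1 <= p c <= m /\ 1 <= q c) /\
    (forall c d x, c < k -> d < k -> c != d ->
        ~~ (in_itv (p c) (p c + q c) x && in_itv (p d) (p d + q d) x)) /\
    (forall c, c < k -> 1 <= p c /\ p c + q c <= m) /\
    (forall x, x \in S -> exists2 c, c < k & in_itv (p c) (p c + q c) x) /\
    (forall c, c < k ->
       let K := Kseq S (p c) (p c + q c) in
       K != [::] ->
       (m %/ (2 * l)) * minn (seq_max K - p c + 1) (p c + q c - seq_min K m + 1)
         <= q c + 1) /\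
    (\sum_(c < k) (q c + 1)) + 2 * (l - size S) <= m.

Definition dispersed (m l : nat) (S : seq nat) : Prop :=
  exists (k psi xi : nat) (p q : nat -> nat),
    1 <= psi <= m /\ 1 <= xi /\
    (forall j, j < k -> 1 <= p j <= m /\ 1 <= q j) /\
    (forall j x, j < k ->
        ~~ (in_itv psi (psi + xi) x && in_itv (p j) (p j + q j) x)) /\
    (forall c d x, c < k -> d < k -> c != d ->
        ~~ (in_itv (p c) (p c + q c) x && in_itv (p d) (p d + q d) x)) /\
    (1 <= psi /\ psi + xi <= m) /\
    (forall j, j < k -> 1 <= p j /\ p j + q j <= m) /\
    (forall x, x \in S ->
        in_itv psi (psi + xi) x \/ exists2 j, j < k & in_itv (p j) (p j + q j) x) /\
    (* (ii): count with multiplicity of indices c with i_c in [p_j, p_j+q_j] *)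
    (forall j, j < k -> 2 * count (in_itv (p j) (p j + q j)) S - 1 <= q j) /\
    ((forall x, ((x \in S) && in_itv psi (psi + xi) x) = (x == psi)) \/
     (forall x, ((x \in S) && in_itv psi (psi + xi) x) = (x == psi + xi))) /\
    ((m %/ (2 * l)) * count (in_itv psi (psi + xi)) S - 1 <= xi) /\
    (xi + 1) + (\sum_(j < k) (q j + 1)) + 2 * (l - size S) <= m.

(* Main.v *)
Require Import Defs.
From mathcomp Require Import all_boot zify.
Set Implicit Arguments. Unset Strict Implicit. Unset Printing Implicit Defensive.

Definition Rl (x y : nat * nat) : bool := x.1 + x.2 < y.1.
Definition inI (iv : nat * nat) (x : nat) : bool := in_itv iv.1 (iv.1 + iv.2) x.

Lemma count_le_pt (T : Type) (a b : pred T) s :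
  (forall x, (a x : nat) <= b x) -> count a s <= count b s.
Proof. move=> H; elim: s => //= x s IH; have := H x; lia. Qed.

Lemma count_add_le (T : Type) (a b c : pred T) s :
  (forall x, (a x : nat) + b x <= c x) -> count a s + count b s <= count c s.
Proof. move=> H; elim: s => //= x s IH; have := H x; lia. Qed.

Lemma count_add_eq (T : Type) (a b c : pred T) s :
  (forall x, (c x : nat) = a x + b x) -> count c s = count a s + count b s.
Proof. move=> H; elim: s => //= x s IH; have := H x; lia. Qed.

Lemma count_add_le1 (T : Type) (a b : pred T) s :
  (forall x, (a x : nat) + b x <= 1) -> count a s + count b s <= size s.
Proof. move=> H; elim: s => //= x s IH; have := H x; lia. Qed.

Lemma count_add3_le1 (T : Type) (a b c : pred T) s :
  (forall x, (a x : nat) + b x + c x <= 1) -> count a s + count b s + count c s <= size s.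
Proof. move=> H; elim: s => //= x s IH; have := H x; lia. Qed.

Lemma count_add3_eq1 (T : Type) (a b c : pred T) s :
  (forall x, (a x : nat) + b x + c x = 1) -> count a s + count b s + count c s = size s.
Proof. move=> H; elim: s => //= x s IH; have := H x; lia. Qed.

Lemma count_pos_mem (a : pred nat) (s : seq nat) x : x \in s -> a x -> 0 < count a s.
Proof. move=> xs ax; rewrite -has_count; apply/hasP; by exists x. Qed.

Lemma count_pos_ex (a : pred nat) (s : seq nat) : 0 < count a s -> exists2 x, x \in s & a x.
Proof. by rewrite -has_count => /hasP. Qed.

Lemma ivt (h : nat -> nat) A : (forall z, h z <= h z.+1) -> 1 < h A ->
  forall B, A <= B -> h B <= B.+1 - A -> exists2 z, A <= z <= B & h z = z.+1 - A.
Proof.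
move=> hmon hA; elim=> [|B IH] AB hB.
  have A0 : A = 0 by lia.
  subst; lia.
case: (eqVneq A B.+1) => [eA|nA].
  subst; lia.
case: (leqP (h B) (B.+1 - A)) => hB'.
  have [z hz1 hz2] := IH ltac:(lia) hB'; exists z => //; lia.
exists B.+1; first lia.
have := hmon B; lia.
Qed.

Definition TwoFam (S : seq nat) (A B : nat) (I : seq (nat*nat)) :=
  [/\ all (fun iv => (A <= iv.1) && (iv.1 + iv.2 <= B) && (0 < iv.2)) I,
      pairwise Rl I,
      (forall x, x \in S -> in_itv A B x -> has (fun iv => inI iv x) I),
      all (fun iv => 2 * count (inI iv) S <= iv.2 + 1) I
    & \sum_(iv <- I) (iv.2 + 1) <= 2 * count (in_itv A B) S].

Lemma two_empty S A B : count (in_itv A B) S = 0 -> TwoFam S A B [::].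
Proof.
move=> c0; split => //; last by rewrite big_nil.
move=> x xS hx; have := count_pos_mem xS hx; by rewrite c0.
Qed.

Lemma two_pack S : forall k A B, B.+1 - A <= k -> 2 * count (in_itv A B) S <= B.+1 - A ->
  exists I, TwoFam S A B I.
Proof.
elim=> [|k IH] A B hk hc.
  exists [::]; apply: two_empty; lia.
case: (posnP (count (in_itv A B) S)) => [c0|cpos].
  by exists [::]; apply: two_empty.
have [x0 x0S hx0] := count_pos_ex cpos.
have AB : A <= B by move: hx0; rewrite /in_itv; lia.
case: (boolP (A \in S)) => [AS|AnS].
- pose h z := 2 * count (in_itv A z) S.
  have hmon : forall z, h z <= h z.+1.
    move=> z; rewrite /h leq_mul2l; apply/orP; right; apply: count_le_pt => y.
    rewrite /in_itv; lia.
  have hA : 1 < h A.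
    have P : in_itv A A A by rewrite /in_itv leqnn.
    have := count_pos_mem AS P; rewrite /h; lia.
  have [z /andP[Az zB] hz] := ivt hmon hA AB hc.
  have split : count (in_itv A B) S = count (in_itv A z) S + count (in_itv z.+1 B) S.
    apply: count_add_eq => y; rewrite /in_itv; lia.
  have hAz : h A <= h z.
    elim: z Az {hz split zB} => [|z IHz]; first by rewrite leqn0 => /eqP->.
    rewrite leq_eqVlt => /orP[/eqP<- //|]; rewrite ltnS => /IHz; move: (hmon z); lia.
  have [I' [b1 b2 b3 b4 b5]] := IH z.+1 B ltac:(lia) ltac:(rewrite /h in hz; lia).
  exists ((A, z - A) :: I'); split.
  + rewrite /=; apply/andP; split; first by apply/andP; split; [apply/andP; split|]; lia.
    by apply/allP => iv /(allP b1) /andP[/andP [? ?] ?]; rewrite /=; apply/andP; split; [apply/andP; split|]; lia.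
  + rewrite /= b2 andbT; apply/allP => iv /(allP b1) /andP[/andP [? ?] ?]; rewrite /Rl /=; lia.
  + move=> x xS hx /=; case: (leqP x z) => xz.
      by rewrite /inI /= /in_itv; apply/orP; left; move: hx; rewrite /in_itv; lia.
    apply/orP; right; apply: b3 => //; move: hx; rewrite /in_itv; lia.
  + have e : inI (A, z - A) = in_itv A z by rewrite /inI /=; congr in_itv; lia.
    rewrite /= b4 andbT e; rewrite /h in hz; lia.
  + rewrite big_cons /=; rewrite /h in hz; lia.
- case: (leqP (2 * count (in_itv A B) S) (B - A)) => hc2.
  + have ceq : count (in_itv A.+1 B) S = count (in_itv A B) S.
      apply: eq_in_count => y yS; rewrite /in_itv.
      have : y != A by apply: contraNneq AnS => <-.
      move=> /eqP ?; lia.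
    have [I [b1 b2 b3 b4 b5]] := IH A.+1 B ltac:(lia) ltac:(lia).
    exists I; split => //.
    * by apply/allP => iv /(allP b1) /andP[/andP [? ?] ?]; apply/andP; split; [apply/andP; split|]; lia.
    * move=> x xS hx; apply: b3 => //; move: hx; rewrite /in_itv.
      have : x != A by apply: contraNneq AnS => <-.
      move=> /eqP; lia.
    * by rewrite -ceq.
  + exists [:: (A, B - A)]; split.
    * rewrite /= andbT; apply/andP; split; [apply/andP; split|]; lia.
    * by [].
    * move=> x xS hx; rewrite /= orbF /inI /=; move: hx; rewrite /in_itv; lia.
    * have e : inI (A, B - A) = in_itv A B by rewrite /inI /=; congr in_itv; lia.
      rewrite /= andbT e; lia.
    * rewrite big_seq1 /=; lia.
Qed.

Lemma inIE (iv : nat * nat) : inI iv = in_itv iv.1 (iv.1 + iv.2).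
Proof. by []. Qed.


Lemma sum_nth (I : seq (nat*nat)) :
  \sum_(j < size I) ((nth (0,0) I j).2 + 1) = \sum_(iv <- I) (iv.2 + 1).
Proof. by rewrite (big_nth (0,0)) big_mkord. Qed.

Lemma pw_disj (I : seq (nat*nat)) c d x : pairwise Rl I -> c < size I -> d < size I -> c != d ->
  ~~ (in_itv (nth (0,0) I c).1 ((nth (0,0) I c).1 + (nth (0,0) I c).2) x &&
      in_itv (nth (0,0) I d).1 ((nth (0,0) I d).1 + (nth (0,0) I d).2) x).
Proof.
move=> /(pairwiseP (0,0)) pw hc hd; case: (ltngtP c d) => // cd _.
  have := pw c d hc hd cd; rewrite /Rl /in_itv; lia.
have := pw d c hd hc cd; rewrite /Rl /in_itv; lia.
Qed.

Lemma has_nth (I : seq (nat*nat)) x : has (fun iv => inI iv x) I ->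
  exists2 j, j < size I & in_itv (nth (0,0) I j).1 ((nth (0,0) I j).1 + (nth (0,0) I j).2) x.
Proof.
move=> /hasP[iv ivI hx]; have /(nthP (0,0)) [j hj e] := ivI.
by exists j => //; rewrite e.
Qed.

Lemma disp_of m l S psi xi (I : seq (nat*nat)) :
  1 <= psi -> 1 <= xi -> psi + xi <= m ->
  all (fun iv => (1 <= iv.1) && (iv.1 + iv.2 <= m) && (0 < iv.2)) I ->
  pairwise Rl I ->
  all (fun iv => (iv.1 + iv.2 < psi) || (psi + xi < iv.1)) I ->
  (forall x, x \in S -> in_itv psi (psi + xi) x \/ has (fun iv => inI iv x) I) ->
  all (fun iv => 2 * count (inI iv) S <= iv.2 + 1) I ->
  ((forall x, ((x \in S) && in_itv psi (psi + xi) x) = (x == psi)) \/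
   (forall x, ((x \in S) && in_itv psi (psi + xi) x) = (x == psi + xi))) ->
  (m %/ (2 * l)) * count (in_itv psi (psi + xi)) S - 1 <= xi ->
  (xi + 1) + (\sum_(iv <- I) (iv.2 + 1)) + 2 * (l - size S) <= m ->
  dispersed m l S.
Proof.
move=> h1 h2 h3 hb hpw hps hcov hii hiii hiv hv.
exists (size I), psi, xi, (fun j => (nth (0,0) I j).1), (fun j => (nth (0,0) I j).2).
refine (conj _ (conj _ (conj _ (conj _ (conj _ (conj _ (conj _ (conj _ (conj _ (conj _ (conj _ _))))))))))).
- lia.
- lia.
- move=> j hj /=; move: (allP hb _ (mem_nth (0,0) hj)) => /=; lia.
- move=> j x hj /=; move: (allP hps _ (mem_nth (0,0) hj)) => /=; rewrite /in_itv; lia.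
- move=> c d x hc hd cd; exact: pw_disj.
- lia.
- move=> j hj /=; move: (allP hb _ (mem_nth (0,0) hj)) => /=; lia.
- move=> x xS; case: (hcov x xS) => [?|/has_nth [j hj hx]]; [by left|right; by exists j].
- move=> j hj /=; move: (allP hii _ (mem_nth (0,0) hj)) => /=; rewrite inIE; lia.
- exact: hiii.
- exact: hiv.
- by rewrite sum_nth.
Qed.

Lemma clust_of m l S (I : seq (nat*nat)) :
  0 < size I ->
  all (fun iv => (1 <= iv.1) && (iv.1 + iv.2 <= m) && (0 < iv.2)) I ->
  pairwise Rl I ->
  (forall x, x \in S -> has (fun iv => inI iv x) I) ->
  all (fun iv => (Kseq S iv.1 (iv.1 + iv.2) != [::]) ==>
     ((m %/ (2 * l)) * minn (seq_max (Kseq S iv.1 (iv.1 + iv.2)) - iv.1 + 1)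
        (iv.1 + iv.2 - seq_min (Kseq S iv.1 (iv.1 + iv.2)) m + 1) <= iv.2 + 1)) I ->
  \sum_(iv <- I) (iv.2 + 1) + 2 * (l - size S) <= m ->
  clustered m l S.
Proof.
move=> h0 hb hpw hcov hii hv.
exists (size I), (fun j => (nth (0,0) I j).1), (fun j => (nth (0,0) I j).2).
refine (conj _ (conj _ (conj _ (conj _ (conj _ (conj _ _)))))).
- exact: h0.
- move=> j hj /=; move: (allP hb _ (mem_nth (0,0) hj)) => /=; lia.
- move=> c d x hc hd cd; exact: pw_disj.
- move=> j hj /=; move: (allP hb _ (mem_nth (0,0) hj)) => /=; lia.
- move=> x xS; have /has_nth [j hj hx] := hcov x xS; by exists j.
- move=> j hj; cbv beta zeta; exact: (implyP (allP hii _ (mem_nth (0,0) hj))).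
- by rewrite sum_nth.
Qed.


Lemma disp_regions m l S psi xi y0 :
  (forall x, x \in S -> 1 <= x <= m) -> size S <= l ->
  1 <= psi -> 1 <= xi -> psi + xi <= m ->
  y0 \in S -> (y0 = psi \/ y0 = psi + xi) ->
  (forall x, x \in S -> in_itv psi (psi + xi) x -> x = y0) ->
  2 * count (in_itv 1 psi.-1) S <= psi.-1 ->
  2 * count (in_itv (psi + xi).+1 m) S <= m - (psi + xi) ->
  xi + 1 = m %/ (2 * l) * count (pred1 y0) S ->
  xi + 1 + 2 * l <= m + 2 * count (pred1 y0) S ->
  dispersed m l S.
Proof.
move=> hS hl h1 h2 h3 y0S hy0 hfree hL hR hc hbud.
have [IL [l1 l2 l3 l4 l5]] := two_pack (S:=S) (leqnn (psi.-1.+1 - 1)) ltac:(lia).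
have [IR [r1 r2 r3 r4 r5]] := two_pack (S:=S) (leqnn (m.+1 - (psi + xi).+1)) ltac:(lia).
have key : forall x, x \in S -> in_itv psi (psi + xi) x = (x == y0).
  move=> x xS; apply/idP/eqP => [hx|->]; first exact: hfree.
  rewrite /in_itv; lia.
apply: (@disp_of m l S psi xi (IL ++ IR) h1 h2 h3).
- rewrite all_cat; apply/andP; split; apply/allP => iv.
    by move=> /(allP l1) /=; lia.
  by move=> /(allP r1) /=; lia.
- rewrite pairwise_cat l2 r2 !andbT; apply/allrelP => a b /(allP l1) /= ha /(allP r1) /= hb.
  rewrite /Rl; lia.
- rewrite all_cat; apply/andP; split; apply/allP => iv.
    by move=> /(allP l1) /=; lia.
  by move=> /(allP r1) /=; lia.
- move=> x xS; have := hS x xS => hx.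
  case: (ltnP x psi) => x1.
    by right; rewrite has_cat l3 // /in_itv; lia.
  case: (leqP x (psi + xi)) => x2.
    by left; rewrite /in_itv; lia.
  by right; rewrite has_cat r3 ?orbT // /in_itv; lia.
- by rewrite all_cat l4 r4.
- have hx : forall x, ((x \in S) && in_itv psi (psi + xi) x) = (x == y0).
    move=> x; case: (boolP (x \in S)) => xS /=; first exact: key.
    by apply/esym/eqP => exy; move: xS; rewrite exy y0S.
  by case: hy0 => e; [left|right] => x; rewrite hx e.
- rewrite (eq_in_count key); have -> : (fun x => x == y0) = pred1 y0 by [].
  lia.
- rewrite big_cat /=.
  have := count_add3_le1 (a := in_itv 1 psi.-1) (b := in_itv (psi + xi).+1 m) (c := pred1 y0) S.
  move=> /(_ ltac:(move=> x; rewrite /in_itv /=; lia)); move: hbud hc l5 r5; set c := count (pred1 y0) S; move=> *; lia.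
Qed.


Definition cL (S : seq nat) z := count (fun x => x <= z) S.
Definition cR (S : seq nat) z := count (fun x => z < x) S.
Definition cM (S : seq nat) a b := count (fun x => a < x <= b) S.
Definition cMl (S : seq nat) a y := count (fun x => a < x < y) S.

Lemma cLR S z : cL S z + cR S z = size S.
Proof. rewrite /cL /cR; elim: S => //= x s IH; lia. Qed.

Lemma seq_max_le (s : seq nat) c : (forall x, x \in s -> x <= c) -> seq_max s <= c.
Proof.
rewrite /seq_max; elim: s => [|x s IH] H; first by rewrite big_nil.
rewrite big_cons geq_max H ?mem_head //=; apply: IH => y ys; apply: H; by rewrite in_cons ys orbT.
Qed.

Lemma seq_min_ge (s : seq nat) c d : (forall x, x \in s -> c <= x) -> c <= d -> c <= seq_min s d.
Proof.
rewrite /seq_min; elim: s => [|x s IH] H cd; first by rewrite big_nil.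
rewrite big_cons leq_min H ?mem_head //=; apply: IH => // y ys; apply: H; by rewrite in_cons ys orbT.
Qed.

Lemma clust_empty m l : 0 < l -> 4 * l <= m -> clustered m l [::].
Proof.
move=> l0 lm; apply: (@clust_of m l [::] [:: (1,1)]) => //=.
- rewrite andbT andbT; lia.
- rewrite big_seq1 /=; lia.
Qed.


Theorem lemma20 (m l : nat) (S : seq nat) :
  0 < l -> 4 * l <= m ->
  size S <= l ->
  all (fun x => 1 <= x <= m) S ->
  clustered m l S \/ dispersed m l S.
Proof.
move=> l0 lm Sl Sall.
have hS : forall x, x \in S -> 1 <= x <= m by move=> x /(allP Sall).
case: (eqVneq S [::]) => [S0|Sn0].
  by left; subst S; apply: clust_empty.
have D2 : 2 <= m %/ (2 * l) by rewrite leq_divRL; (timeout 15 lia).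
have Dm : m %/ (2 * l) * (2 * l) <= m := leq_divM m (2 * l).
move: D2 Dm; set D := m %/ (2 * l) => D2 Dm.
have eD : m %/ (2 * l) = D := erefl.
clearbody D.
have Dm' : D * (2 * l) <= m := Dm.
have exu : exists z, (fun z => (z <= 2 * cL S z) && (z <= m)) z by exists 0.
have ubu : forall z, (fun z => (z <= 2 * cL S z) && (z <= m)) z -> z <= m.
  by move=> z /andP[].
case: (@ex_maxnP (fun z => (z <= 2 * cL S z) && (z <= m)) m exu ubu) => u /= /andP[F1 um] F2'.
have F2 : forall z, u < z -> z <= m -> 2 * cL S z < z.
  move=> z uz zm; rewrite ltnNge; apply/negP => H.
  have := F2' z; rewrite /= H zm => /(_ isT); (timeout 15 lia).
have exv : exists z, (fun z => m - z <= 2 * cR S z) z by exists m; rewrite /= subnn.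
case: (@ex_minnP (fun z => m - z <= 2 * cR S z) exv) => v /= F3 F4'.
have vm : v <= m by apply: F4'; rewrite /= subnn.
have F4 : forall z, z < v -> 2 * cR S z < m - z.
  move=> z zv; rewrite ltnNge; apply/negP => H; have := F4' z H; (timeout 15 lia).
have cSl : forall z, cL S z <= size S /\ cR S z <= size S.
  move=> z; have := cLR S z; (timeout 15 lia).
have uv : u < v.
  rewrite ltnNge; apply/negP => vu.
  have [h1 _] := cSl u; have [_ h2] := cSl v.
  have e : u = v by (timeout 15 lia).
  subst u; have := cLR S v; (timeout 15 lia).
have [w ew] : exists w, m = v + w by exists (m - v); lia.
have F3w : w <= 2 * cR S v by have := F3; rewrite {1}ew addKn.
have [r er] : exists r, l = size S + r by exists (l - size S); lia.
have lr : l - size S = r by rewrite er addKn.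
have Dl : D * (2 * l) = D * (2 * size S) + D * (2 * r) by rewrite er -mulnDr; congr (D * _); lia.
have Dr : 2 * r <= D * (2 * r) by apply: leq_pmull; lia.
case: (boolP (has (fun x => u < x <= v) S)) => hM; last first.
  left.
  have noM : forall x, x \in S -> (x <= u) || (v < x).
    move=> x xS; have := hasPn hM x xS; (timeout 15 lia).
  have hPQ : cL S u + cR S v <= size S.
    rewrite /cL /cR; apply: count_add_le1 => x; (timeout 15 lia).
  have K1 : D * u <= D * (2 * cL S u) := leq_mul (leqnn D) F1.
  have K2 : D * w <= D * (2 * cR S v) := leq_mul (leqnn D) F3w.
  have K3 : D * (2 * (cL S u + cR S v)) <= D * (2 * size S).
    by apply: leq_mul => //; (timeout 15 lia).
  have Ksum : D * u + D * w + 2 * r <= m.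
    clear -K1 K2 K3 Dl Dr Dm'; (timeout 15 lia).
  clear K1 K2 K3.
  have K6 : w <= D * w by apply: leq_pmull; (timeout 15 lia).
  have K7 : u <= D * u by apply: leq_pmull; (timeout 15 lia).
  have K8 : 2 * u <= D * u := leq_mul D2 (leqnn u).
  have K9 : 2 * w <= D * w := leq_mul D2 (leqnn _).
  clear F3 F4' F2' exu ubu exv Dl Dr Dm Dm'.
  pose IP := (1, D * u - 1).
  pose IQ := (m - D * w + 1, D * w - 1).
  have uP : 0 < cL S u -> 1 <= u.
    move=> /count_pos_ex [x xS hx]; have := hS x xS; (timeout 15 lia).
  have vQ : 0 < cR S v -> v < m.
    move=> /count_pos_ex [x xS hx]; have := hS x xS; (timeout 15 lia).
  have bP : 0 < cL S u -> (1 <= IP.1) && (IP.1 + IP.2 <= m) && (0 < IP.2).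
    move=> /uP ?; rewrite /IP /=; (timeout 15 lia).
  have bQ : 0 < cR S v -> (1 <= IQ.1) && (IQ.1 + IQ.2 <= m) && (0 < IQ.2).
    move=> /vQ ?; rewrite /IQ /=; (timeout 15 lia).
  have cP : 0 < cL S u -> forall x, x \in S -> x <= u -> inI IP x.
    move=> /uP ? x xS xu; have := hS x xS; rewrite /inI /IP /in_itv /=; (timeout 15 lia).
  have cQ : 0 < cR S v -> forall x, x \in S -> v < x -> inI IQ x.
    move=> /vQ ? x xS xu; have := hS x xS; rewrite /inI /IQ /in_itv /=; (timeout 15 lia).
  have iiP : 0 < cL S u -> (Kseq S IP.1 (IP.1 + IP.2) != [::]) ==>
     (D * minn (seq_max (Kseq S IP.1 (IP.1 + IP.2)) - IP.1 + 1)
        (IP.1 + IP.2 - seq_min (Kseq S IP.1 (IP.1 + IP.2)) m + 1) <= IP.2 + 1).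
    move=> /uP u1; apply/implyP => _.
    have hmax : seq_max (Kseq S IP.1 (IP.1 + IP.2)) <= u.
      apply: seq_max_le => x; rewrite mem_filter => /andP[hx xS].
      have := noM x xS; move: hx; rewrite /IP /in_itv /=; (timeout 15 lia).
    set a := seq_max _ in hmax *.
    apply: leq_trans (leq_mul (leqnn D) (geq_minl _ _)) _.
    have h : a - IP.1 + 1 <= u by rewrite /IP /=; (timeout 15 lia).
    have := leq_mul (leqnn D) h; rewrite /IP /=; (timeout 15 lia).
  have iiQ : 0 < cR S v -> (Kseq S IQ.1 (IQ.1 + IQ.2) != [::]) ==>
     (D * minn (seq_max (Kseq S IQ.1 (IQ.1 + IQ.2)) - IQ.1 + 1)
        (IQ.1 + IQ.2 - seq_min (Kseq S IQ.1 (IQ.1 + IQ.2)) m + 1) <= IQ.2 + 1).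
    move=> /vQ v1; apply/implyP => _.
    have hmin' : v.+1 <= seq_min (Kseq S IQ.1 (IQ.1 + IQ.2)) m.
      apply: seq_min_ge => // x; rewrite mem_filter => /andP[hx xS].
      have := noM x xS; move: hx; rewrite /IQ /in_itv /=; clear -Ksum K7 ew; (timeout 15 lia).
    set a := seq_min _ m in hmin' *.
    apply: leq_trans (leq_mul (leqnn D) (geq_minr _ _)) _.
    have h : IQ.1 + IQ.2 - a + 1 <= w by rewrite /IQ /=; clear -hmin' Ksum K9 ew v1; (timeout 15 lia).
    have := leq_mul (leqnn D) h; rewrite /IQ /=; clear -K9 ew v1; (timeout 15 lia).
  case: (posnP (cL S u)) => [P0|Ppos]; case: (posnP (cR S v)) => [Q0|Qpos].
  - exfalso; have hs : 0 < size S by rewrite lt0n size_eq0.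
    have xS := mem_nth 0 hs; case/orP: (noM _ xS) => hx.
      have H : 0 < cL S u by apply: count_pos_mem xS hx.
      by rewrite P0 in H.
    have H : 0 < cR S v by apply: count_pos_mem xS hx.
    by rewrite Q0 in H.
  - apply: (@clust_of m l S [:: IQ]).
    + by [].
    + by rewrite all_seq1 bQ.
    + by [].
    + move=> x xS; rewrite has_seq1; apply: cQ => //; have := noM x xS.
      have : x <= u -> 0 < cL S u by move=> xu; apply: count_pos_mem xS xu.
      clear -P0; (timeout 15 lia).
    + rewrite all_seq1 eD; exact: iiQ Qpos.
    + rewrite lr big_seq1 /IQ /=; have := vQ Qpos; clear -Ksum K9 ew; (timeout 15 lia).
  - apply: (@clust_of m l S [:: IP]).
    + by [].
    + by rewrite all_seq1 bP.
    + by [].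
    + move=> x xS; rewrite has_seq1; apply: cP => //; have := noM x xS.
      have : v < x -> 0 < cR S v by move=> xu; apply: count_pos_mem xS xu.
      clear -Q0; (timeout 15 lia).
    + rewrite all_seq1 eD; exact: iiP Ppos.
    + rewrite lr big_seq1 /IP /=; have := uP Ppos; clear -Ksum K8 ew; (timeout 15 lia).
  - have rPQ : Rl IP IQ.
      rewrite /Rl /IP /IQ /=; have := uP Ppos; have := vQ Qpos; clear -Ksum K8 K9 ew; (timeout 15 lia).
    apply: (@clust_of m l S [:: IP; IQ]).
    + by [].
    + by rewrite /= bP // bQ.
    + by rewrite pairwise_cons all_seq1 rPQ.
    + move=> x xS; rewrite /= orbF; case/orP: (noM x xS) => hx.
        by rewrite cP.
      by rewrite cQ // orbT.
    + rewrite /= eD; apply/andP; split; [exact: iiP Ppos | by rewrite iiQ].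
    + rewrite lr big_cons big_seq1 /IP /IQ /=; have := uP Ppos; have := vQ Qpos.
      clear -Ksum K8 K9 ew; (timeout 15 lia).
right.
have [x0 x0S hx0] := hasP hM.
have part : cL S u + cM S u v + cR S v = size S.
  rewrite /cL /cM /cR; apply: count_add3_eq1 => x; clear -uv; lia.
have noU1 : forall x, x \in S -> u < x -> u.+1 < x.
  move=> x xS ux; rewrite ltn_neqAle ux andbT; apply/negP => /eqP ex; subst x.
  have e : cL S u.+1 = cL S u + count (pred1 u.+1) S.
    by rewrite /cL; apply: count_add_eq => y /=; lia.
  have c1 : 0 < count (pred1 u.+1) S := count_pos_mem (a := pred1 _) xS (eqxx _).
  have xm : u.+1 <= m by have := hS _ xS; lia.
  have := F2 u.+1 (ltnSn u) xm; clear -e c1 F1; lia.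
have noV : forall x, x \in S -> x <= v -> x < v.
  move=> x xS xv; rewrite ltn_neqAle xv andbT; apply/negP => /eqP ex; subst x.
  have v1 : 0 < v by have := hS _ xS; lia.
  have e : cR S v.-1 = cR S v + count (pred1 v) S.
    by rewrite /cR; apply: count_add_eq => y /=; lia.
  have c1 : 0 < count (pred1 v) S := count_pos_mem (a := pred1 _) xS (eqxx _).
  have := F4 v.-1 ltac:(lia); clear -e c1 F3w ew v1; lia.
have Dn : D * (2 * size S) <= m by clear -Dl Dm'; lia.
have DnS : D * (2 * size S) = 2 * (D * cL S u) + 2 * (D * cM S u v) + 2 * (D * cR S v).
  by rewrite -part; lia.
have G1 : 2 * cL S u <= D * cL S u := leq_mul D2 (leqnn _).
have G2 : 2 * cR S v <= D * cR S v := leq_mul D2 (leqnn _).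
have gap : 2 * (D * cM S u v) <= v - u by clear -Dn DnS G1 G2 F1 F3w ew uv; lia.
have budget : forall c, c <= size S -> D * c - 1 + 1 + 2 * l <= m + 2 * c.
  move=> c cs; have cl : c <= l by lia.
  have := leq_mul (leqnn D) cl; clear -Dm' lm l0; lia.
case: (boolP (has (fun y => (u < y <= v) && (y + D * cM S u v <= v + D * cMl S u y)) S)) => hG.
- pose P := fun y => (y \in S) && ((u < y <= v) && (y + D * cM S u v <= v + D * cMl S u y)).
  have exy : exists y, P y by have [y yS hy] := hasP hG; exists y; rewrite /P yS.
  have uby : forall y, P y -> y <= v by move=> y /and3P[_ /andP[_ ?] _].
  case: (@ex_maxnP P v exy uby) => ys /and3P[ysS /andP[uys ysv] Gys] maxys.
  have cpos : 0 < count (pred1 ys) S := count_pos_mem (a := pred1 ys) ysS (eqxx ys).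
  have hMc : cMl S u ys + count (pred1 ys) S <= cM S u v.
    rewrite /cMl /cM; apply: count_add_le => y /=; clear -uys ysv; lia.
  have hD1 := leq_mul (leqnn D) hMc.
  have ysDc : ys + D * count (pred1 ys) S <= v by clear -hD1 Gys; lia.
  have far : forall x, x \in S -> ys < x -> ys + D * count (pred1 ys) S <= x.
    move=> x xS ysx; case: (leqP x v) => xv; last by clear -ysDc xv; lia.
    have nG : ~~ (x + D * cM S u v <= v + D * cMl S u x).
      apply/negP => Gx.
      have Px : P x by rewrite /P xS Gx andbT /=; clear -uys ysx xv; lia.
      have := maxys x Px; clear -ysx; lia.
    have hcx : cMl S u ys + count (pred1 ys) S <= cMl S u x.
      rewrite /cMl; apply: count_add_le => y /=; clear -ysx uys; lia.
    have hD2 := leq_mul (leqnn D) hcx.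
    clear -nG hD2 Gys; lia.
  have ys2 := noU1 ys ysS uys.
  have Dc2 : 2 <= D * count (pred1 ys) S by have := leq_mul D2 cpos; lia.
  have ysm : ys <= m by have := hS ys ysS; lia.
  have csz : count (pred1 ys) S <= size S := count_size _ _.
  apply: (@disp_regions m l S ys (D * count (pred1 ys) S - 1) ys).
  + exact: hS.
  + exact: Sl.
  + clear -ys2; lia.
  + clear -Dc2; lia.
  + clear -ysDc vm Dc2; lia.
  + exact: ysS.
  + by left.
  + move=> x xS hx; apply/eqP/negP => nx.
    have ysx : ys < x by move: hx nx; rewrite /in_itv; clear; lia.
    have := far x xS ysx; move: hx; rewrite /in_itv; clear -Dc2; lia.
  + have h1 : count (in_itv 1 ys.-1) S <= cL S ys.-1.
      by apply: count_le_pt => y; rewrite /in_itv; lia.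
    have := F2 ys.-1 ltac:(clear -ys2; lia) ltac:(clear -ysm; lia); clear -h1; lia.
  + set z := ys + (D * count (pred1 ys) S - 1).
    have h1 : count (in_itv z.+1 m) S <= cR S z.
      by apply: count_le_pt => y; rewrite /in_itv; lia.
    have := F4 z ltac:(rewrite /z; clear -ysDc Dc2; lia); clear -h1; lia.
  + rewrite eD; clear -Dc2; lia.
  + exact: budget.
- pose P := fun y => (y \in S) && (u < y <= v).
  have exy : exists y, P y by exists x0; rewrite /P x0S.
  case: (@ex_minnP P exy) => y1 /andP[y1S /andP[uy1 y1v]] miny1.
  have c0 : cMl S u y1 = 0.
    apply/eqP; rewrite -leqn0 leqNgt -has_count; apply/hasPn => x xS; apply/negP => hx.
    have Px : P x by rewrite /P xS /=; move: hx; clear -y1v; lia.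
    have := miny1 x Px; move: hx; clear; lia.
  have nG : ~~ (y1 + D * cM S u v <= v + D * cMl S u y1).
    by move: (hasPn hG y1 y1S); rewrite uy1 y1v.
  have c1pos : 0 < count (pred1 y1) S := count_pos_mem (a := pred1 y1) y1S (eqxx y1).
  have c1M : count (pred1 y1) S <= cM S u v.
    by rewrite /cM; apply: count_le_pt => y /=; clear -uy1 y1v; lia.
  have hD1 := leq_mul (leqnn D) c1M.
  have y1big : u + D * count (pred1 y1) S < y1.
    by rewrite c0 in nG; clear -nG gap hD1 uv; lia.
  have y1v' : y1 < v := noV y1 y1S y1v.
  have Dc2 : 2 <= D * count (pred1 y1) S by have := leq_mul D2 c1pos; lia.
  have y1m : y1 <= m by have := hS y1 y1S; lia.
  have csz : count (pred1 y1) S <= size S := count_size _ _.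
  apply: (@disp_regions m l S (y1 - (D * count (pred1 y1) S - 1)) (D * count (pred1 y1) S - 1) y1).
  + exact: hS.
  + exact: Sl.
  + clear -y1big Dc2; lia.
  + clear -Dc2; lia.
  + clear -y1big y1m Dc2; lia.
  + exact: y1S.
  + right; clear -y1big Dc2; lia.
  + move=> x xS hx; apply/eqP/negP => nx.
    have Px : P x by rewrite /P xS /=; move: hx nx; rewrite /in_itv; clear -y1big Dc2 y1v; lia.
    have := miny1 x Px; move: hx nx; rewrite /in_itv; clear -y1big Dc2; lia.
  + have h1 : count (in_itv 1 (y1 - (D * count (pred1 y1) S - 1)).-1) S
              <= cL S (y1 - (D * count (pred1 y1) S - 1)).-1.
      by apply: count_le_pt => y; rewrite /in_itv; lia.
    have := F2 (y1 - (D * count (pred1 y1) S - 1)).-1 ltac:(clear -y1big Dc2; lia) ltac:(clear -y1m; lia).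
    clear -h1; lia.
  + have e : y1 - (D * count (pred1 y1) S - 1) + (D * count (pred1 y1) S - 1) = y1.
      by clear -y1big Dc2; lia.
    rewrite e.
    have h1 : count (in_itv y1.+1 m) S <= cR S y1.
      by apply: count_le_pt => y; rewrite /in_itv; lia.
    have := F4 y1 y1v'; clear -h1; lia.
  + rewrite eD; clear -Dc2; lia.
  + exact: budget.
Qed.
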